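(* There is no real polynomial $p$ such that the restriction $p|_{[0,1]}$ satisfies $\Omega_{p|_{[0,1]}}=\{0,2,4\}$, whereas there exists a continuous function $f:[0,1]\to\mathbb{R}$ with $\Omega_f=\{0,2,4\}$.
   Context: $\mathbb{N}=\{0,1,2,\dots\}$. For $f:[0,1]\to\mathbb{R}$, $\Omega_f=\{n\in\mathbb{N}\cup\{\infty\} : \exists x\in\mathbb{R}\text{ with } |f^{-1}(x)|=n\}$, where $|f^{-1}(x)|$ is the cardinality of $\{t\in[0,1]: f(t)=x\}$ and $\infty$ stands for an infinite cardinality. *)

(* Defs.v *)
From Stdlib Require Import Reals List.
Open Scope R_scope.

(* Extended cardinal: Some n = finite cardinality n, None = infinite. *)
Definition ecard := option nat.

Definition level_card_fin (f : R -> R) (x : R) (n : nat) : Prop :=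
  exists l : list R,
    NoDup l /\ length l = n /\
    (forall t, In t l <-> (0 <= t <= 1 /\ f t = x)).

Definition level_card_inf (f : R -> R) (x : R) : Prop :=
  forall n : nat, exists l : list R,
    NoDup l /\ length l = n /\
    (forall t, In t l -> 0 <= t <= 1 /\ f t = x).

Definition Omega (f : R -> R) (k : ecard) : Prop :=
  match k with
  | Some n => exists x : R, level_card_fin f x n
  | None => exists x : R, level_card_inf f x
  end.

Definition Omega_is_024 (f : R -> R) : Prop :=
  forall k : ecard, Omega f k <-> (k = Some 0%nat \/ k = Some 2%nat \/ k = Some 4%nat).

(* Real polynomial with coefficient list [a0; a1; ...]: a0 + a1 t + ... *)
Fixpoint poly_eval (p : list R) (t : R) : R :=
  match p with
  | nil => 0
  | a :: q => a + t * poly_eval q t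
  end.

Definition continuous_on_01 (f : R -> R) : Prop :=
  forall x, 0 <= x <= 1 ->
    forall eps, 0 < eps -> exists delta, 0 < delta /\
      forall y, 0 <= y <= 1 -> Rabs (y - x) < delta -> Rabs (f y - f x) < eps.

(* Main.v *)
Require Import Defs.
From Stdlib Require Import Reals List Lra Lia Classical FunctionalExtensionality ZArith.
Open Scope R_scope.

Fixpoint Pn (n:nat) (f:R->R) : Prop :=
  match n with
  | O => exists c, forall x, f x = c
  | S m => exists g, Pn m g /\ forall x, derivable_pt_lim f x (g x)
  end.

Lemma Pn_const : forall n c, Pn n (fun _ => c).
Proof.
  induction n; intros c; simpl.
  - exists c; auto.
  - exists (fun _ => 0); split; auto. intros x; apply derivable_pt_lim_const.
Qed.

Lemma Pn_plus : forall n f g, Pn n f -> Pn n g -> Pn n (fun x => f x + g x).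
Proof.
  induction n; intros f g Hf Hg; simpl in *.
  - destruct Hf as [c1 H1]; destruct Hg as [c2 H2]; exists (c1+c2); intros; rewrite H1, H2; auto.
  - destruct Hf as [f' [Hf' Df]]; destruct Hg as [g' [Hg' Dg]].
    exists (fun x => f' x + g' x); split; auto.
    intros x. apply (derivable_pt_lim_plus f g x); auto.
Qed.

Lemma Pn_ext : forall n f g, Pn n f -> (forall x, f x = g x) -> Pn n g.
Proof.
  intros n f g H E. assert (f = g) by (apply functional_extensionality; auto). subst; auto.
Qed.

Lemma D_mulx : forall g x l, derivable_pt_lim g x l -> derivable_pt_lim (fun t => t * g t) x (1 * g x + x * l).
Proof.
  intros g x l H. change (fun t => t * g t) with (mult_fct id g).
  apply derivable_pt_lim_mult; auto. apply derivable_pt_lim_id.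
Qed.

Lemma Pn_mulx : forall n g, Pn n g -> Pn (S n) (fun t => t * g t).
Proof.
  induction n; intros g Hg.
  - destruct Hg as [c Hc]. simpl. exists (fun _ => c). split. exists c; auto.
    intros x. replace c with (1 * g x + x * 0) by (rewrite Hc; ring).
    apply D_mulx.
    assert (g = fun _ => c) by (apply functional_extensionality; auto). subst.
    apply derivable_pt_lim_const.
  - destruct Hg as [h [Hh Dg]].
    exists (fun x => 1 * g x + x * h x). split.
    + apply Pn_plus. apply Pn_ext with g. simpl. exists h; auto. intros; ring.
      apply IHn; auto.
    + intros x. apply D_mulx. auto.
Qed.

Lemma poly_Pn : forall p, Pn (length p) (poly_eval p).
Proof.
  induction p as [|a q IH]; simpl.
  - exists 0; auto.
  - apply (Pn_plus (S (length q)) (fun _ => a) (fun t => t * poly_eval q t)).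
    apply Pn_const. apply Pn_mulx; auto.
Qed.

Lemma Pn_cont : forall n f, Pn n f -> continuity f.
Proof.
  destruct n; intros f H; simpl in H.
  - destruct H as [c Hc]. apply continuity_const. intros x y; rewrite !Hc; auto.
  - destruct H as [g [_ D]]. intros x. apply derivable_continuous_pt.
    exists (g x); apply D.
Qed.

Definition smono (f:R->R) a b :=
  (forall x y, a <= x -> x < y -> y <= b -> f x < f y) \/
  (forall x y, a <= x -> x < y -> y <= b -> f y < f x).

Inductive PM (f:R->R) : R -> R -> list R -> Prop :=
| pm1 : forall a b, a < b -> smono f a b -> PM f a b (f a :: f b :: nil)
| pm2 : forall a b c l, a < b -> smono f a b -> PM f b c l -> PM f a c (f a :: l).

Lemma PM_cat : forall f a b l1, PM f a b l1 -> forall c l2, PM f b c l2 -> exists l, PM f a c l.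
Proof.
  intros f a b l1 H; induction H; intros c' l2 H2.
  - exists (f a :: l2). apply pm2 with b; auto.
  - destruct (IHPM c' l2 H2) as [l' Hl']. exists (f a :: l'). apply pm2 with b; auto.
Qed.

Lemma IVT2 : forall f a b y, continuity f -> a < b -> f a < y < f b ->
  exists t, a <= t <= b /\ f t = y.
Proof.
  intros f a b y Hc Hab Hy.
  destruct (IVT (fun x => f x - y) a b) as [t [Ht Ht2]]; try lra.
  - apply continuity_minus; auto. apply continuity_const. intros ? ?; auto.
  - exists t; split; auto; lra.
Qed.

Lemma IVT3 : forall f a b y, continuity f -> a < b -> f b < y < f a ->
  exists t, a <= t <= b /\ f t = y.
Proof.
  intros f a b y Hc Hab Hy.
  destruct (IVT (fun x => y - f x) a b) as [t [Ht Ht2]]; try lra.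
  - apply continuity_minus; auto. apply continuity_const. intros ? ?; auto.
  - exists t; split; auto; lra.
Qed.

Lemma key_smono : forall f g a b, (forall x, derivable_pt_lim f x (g x)) -> continuity g ->
  a < b -> (forall t, a < t < b -> g t <> 0) -> smono f a b.
Proof.
  intros f g a b D Cg Hab Hnz.
  pose (pr := fun x => exist (fun l => derivable_pt_lim f x l) (g x) (D x) : derivable_pt f x).
  destruct (classic (exists t, a < t < b /\ g t > 0)) as [[t0 [Ht0 Hp]]|Hn].
  - assert (Hall : forall t, a < t < b -> 0 < g t).
    { intros t Ht. destruct (Rtotal_order (g t) 0) as [Hl|[He|Hg]]; [|exfalso; apply (Hnz t); auto|lra].
      exfalso. destruct (Rtotal_order t t0) as [Hlt|[Heq|Hgt]].
      - destruct (IVT2 g t t0 0) as [z [Hz1 Hz2]]; auto; try lra. apply (Hnz z); auto; lra.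
      - subst; lra.
      - destruct (IVT3 g t0 t 0) as [z [Hz1 Hz2]]; auto; try lra. apply (Hnz z); auto; lra. }
    left. intros x y Hx Hxy Hy.
    apply (derive_increasing_interv a b f pr Hab); auto; try lra.
  - assert (Hall : forall t, a < t < b -> g t < 0).
    { intros t Ht. destruct (Rtotal_order (g t) 0) as [Hl|[He|Hg]]; auto.
      exfalso; apply (Hnz t); auto. exfalso; apply Hn; exists t; auto. }
    right. intros x y Hx Hxy Hy.
    assert (D' : forall x, derivable_pt_lim (fun t => - f t) x (- g x)).
    { intros z. apply (derivable_pt_lim_opp f). auto. }
    pose (pr' := fun x => exist (fun l => derivable_pt_lim (fun t => - f t) x l) (- g x) (D' x) : derivable_pt (fun t => - f t) x).
    assert (- f x < - f y). { apply (derive_increasing_interv a b (fun t => - f t) pr' Hab); auto; try lra.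
      intros t Ht. simpl. specialize (Hall t Ht). lra. }
    lra.
Qed.

Lemma const_deriv0 : forall f g a b, (forall x, derivable_pt_lim f x (g x)) ->
  a < b -> (forall t, a <= t <= b -> g t = 0) -> forall x, a <= x <= b -> f x = f a.
Proof.
  intros f g a b D Hab H0 x Hx.
  pose (pr := fun x (_ : a < x < b) => exist (fun l => derivable_pt_lim f x l) (g x) (D x) : derivable_pt f x).
  assert (Hc : constant_D_eq f (fun x => a <= x <= b) (f a)).
  apply (null_derivative_loc f a b pr).
  - intros z _. apply derivable_continuous_pt. exists (g z). apply D.
  - intros z P. simpl. apply H0; lra.
  - apply Hc; auto.
Qed.

Lemma pm_main : forall n f, Pn n f -> forall a b, a < b ->
  (forall x, a <= x <= b -> f x = f a) \/ exists l, PM f a b l.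
Proof.
  induction n; intros f Hf a b Hab.
  - left. destruct Hf as [c Hc]. intros; rewrite !Hc; auto.
  - destruct Hf as [g [Hg D]]. assert (Cg := Pn_cont n g Hg).
    destruct (IHn g Hg a b Hab) as [Hc | [l Hl]].
    + destruct (Req_EM_T (g a) 0) as [Hz|Hnz].
      * left. intros x Hx. apply (const_deriv0 f g a b); auto. intros t Ht. rewrite Hc; auto.
      * right. exists (f a :: f b :: nil). apply pm1; auto.
        apply (key_smono f g); auto. intros t Ht. rewrite Hc; auto; lra.
    + right. clear Hab. induction Hl.
      * destruct (classic (exists z, a < z < b /\ g z = 0)) as [[z [Hz Hgz]]|Hn].
        -- exists (f a :: f z :: f b :: nil). apply pm2 with z; try lra.
           apply (key_smono f g); auto; try lra. intros t Ht.
           destruct H0 as [Hi|Hd]; [specialize (Hi t z)|specialize (Hd t z)]; lra.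
           apply pm1; try lra. apply (key_smono f g); auto; try lra. intros t Ht.
           destruct H0 as [Hi|Hd]; [specialize (Hi z t)|specialize (Hd z t)]; lra.
        -- exists (f a :: f b :: nil). apply pm1; auto. apply (key_smono f g); auto.
           intros t Ht E. apply Hn. exists t; auto.
      * destruct IHHl as [l2 Hl2].
        assert (exists l1, PM f a b l1).
        { destruct (classic (exists z, a < z < b /\ g z = 0)) as [[z [Hz Hgz]]|Hn].
        -- exists (f a :: f z :: f b :: nil). apply pm2 with z; try lra.
           apply (key_smono f g); auto; try lra. intros t Ht.
           destruct H0 as [Hi|Hd]; [specialize (Hi t z)|specialize (Hd t z)]; lra.
           apply pm1; try lra. apply (key_smono f g); auto; try lra. intros t Ht.
           destruct H0 as [Hi|Hd]; [specialize (Hi z t)|specialize (Hd z t)]; lra.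
        -- exists (f a :: f b :: nil). apply pm1; auto. apply (key_smono f g); auto.
           intros t Ht E. apply Hn. exists t; auto. }
        destruct H1 as [l1 Hl1]. apply (PM_cat f a b l1 Hl1 c l2 Hl2).
Qed.

Definition eqi (w y : R) : nat := if Req_EM_T w y then 1%nat else 0%nat.
Definition bt (w w' y : R) : nat :=
  if Rlt_dec (Rmin w w') y then if Rlt_dec y (Rmax w w') then 1%nat else 0%nat else 0%nat.
Fixpoint cnt (l:list R) (y:R) : nat :=
  match l with
  | nil => 0%nat
  | w :: r => (eqi w y + match r with nil => 0%nat | w' :: _ => bt w w' y end + cnt r y)%nat
  end.

Ltac mm := unfold Rmin, Rmax in *; repeat destruct Rle_dec; lra.

Lemma smono_inj : forall f a b s t, smono f a b -> a <= s <= b -> a <= t <= b -> f s = f t -> s = t.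
Proof.
  intros f a b s t [H|H] Hs Ht E; destruct (Rtotal_order s t) as [L|[L|L]]; auto;
  try (specialize (H s t); lra); try (specialize (H t s); lra).
Qed.

Lemma smono_btw : forall f a b t, smono f a b -> a < t < b ->
  Rmin (f a) (f b) < f t < Rmax (f a) (f b).
Proof.
  intros f a b t [H|H] Ht.
  - assert (H1 := H a t); assert (H2 := H t b). split; mm.
  - assert (H1 := H a t); assert (H2 := H t b). split; mm.
Qed.

Lemma smono_ne : forall f a b, smono f a b -> a < b -> f a <> f b.
Proof. intros f a b [H|H] Hab; [specialize (H a b)|specialize (H a b)]; lra. Qed.

Lemma half_level : forall f a b, continuity f -> a < b -> smono f a b -> forall y,
  exists L, NoDup L /\ length L = (eqi (f a) y + bt (f a) (f b) y)%nat /\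
   forall t, In t L <-> (a <= t < b /\ f t = y).
Proof.
  intros f a b Hc Hab Hs y. assert (Hne := smono_ne f a b Hs Hab).
  unfold eqi, bt. destruct (Req_EM_T (f a) y) as [E|E].
  - assert (B : (if Rlt_dec (Rmin (f a) (f b)) y then if Rlt_dec y (Rmax (f a) (f b)) then 1%nat else 0%nat else 0%nat) = 0%nat).
    { destruct Rlt_dec; auto. destruct Rlt_dec; auto. exfalso. mm. }
    rewrite B. exists (a :: nil). split. constructor; auto; constructor. split; auto.
    intros t; simpl; split.
    + intros [<-|[]]; split; auto; lra.
    + intros [Ht Hft]. left. apply (smono_inj f a b); auto; lra.
  - destruct (Rlt_dec (Rmin (f a) (f b)) y) as [L1|L1]; [destruct (Rlt_dec y (Rmax (f a) (f b))) as [L2|L2]|].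
    + assert (exists t0, a <= t0 <= b /\ f t0 = y) as [t0 [Ht0 Hf0]].
      { destruct (Rlt_dec (f a) (f b)).
        - apply IVT2; auto; split; mm.
        - apply IVT3; auto; split; mm. }
      assert (t0 <> a) by (intro; subst; auto).
      assert (t0 <> b) by (intro; subst; mm).
      exists (t0 :: nil). split. constructor; auto; constructor. split; auto.
      intros t; simpl; split.
      * intros [<-|[]]; split; auto; lra.
      * intros [Ht Hft]. left. apply (smono_inj f a b); auto; try lra; congruence.
    + exists nil. split. constructor. split; auto. intros t; simpl; split; [intros []|].
      intros [Ht Hft]. destruct (Req_EM_T t a). subst; auto.
      assert (Hb := smono_btw f a b t Hs ltac:(lra)). lra.
    + exists nil. split. constructor. split; auto. intros t; simpl; split; [intros []|].
      intros [Ht Hft]. destruct (Req_EM_T t a). subst; auto.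
      assert (Hb := smono_btw f a b t Hs ltac:(lra)). lra.
Qed.

Lemma PM_head : forall f a b l, PM f a b l -> exists r, l = f a :: r.
Proof. intros f a b l H; destruct H; eauto. Qed.

Lemma PM_lt : forall f a b l, PM f a b l -> a < b.
Proof. intros f a b l H; induction H; lra. Qed.

Lemma PM_level : forall f a b l, PM f a b l -> continuity f -> forall y,
  exists L, NoDup L /\ length L = cnt l y /\ forall t, In t L <-> (a <= t <= b /\ f t = y).
Proof.
  intros f a b l H Hc; induction H; intros y.
  - destruct (half_level f a b Hc H H0 y) as [L1 [N1 [E1 M1]]].
    exists (L1 ++ (if Req_EM_T (f b) y then b :: nil else nil)).
    split; [|split].
    + apply NoDup_app; auto. destruct Req_EM_T; repeat constructor; auto.
      intros x Hx Hx2. apply M1 in Hx. destruct Req_EM_T; simpl in Hx2; [destruct Hx2 as [<-|[]]|destruct Hx2]. lra.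
    + rewrite length_app, E1. simpl. unfold eqi at 3. destruct (Req_EM_T (f b) y); simpl; lia.
    + intros t. rewrite in_app_iff, M1. destruct Req_EM_T as [E|E]; simpl; split.
      * intros [[? ?]|[<-|[]]]; split; auto; lra.
      * intros [Ht Hft]. destruct (Req_EM_T t b); [subst; auto|left; split; auto; lra].
      * intros [[? ?]|[]]; split; auto; lra.
      * intros [Ht Hft]. destruct (Req_EM_T t b); [subst; tauto|left; split; auto; lra].
  - destruct (half_level f a b Hc H H0 y) as [L1 [N1 [E1 M1]]].
    destruct (IHPM y) as [L2 [N2 [E2 M2]]].
    destruct (PM_head f b c l H1) as [r Hr].
    exists (L1 ++ L2). split; [|split].
    + apply NoDup_app; auto. intros x Hx Hx2. apply M1 in Hx. apply M2 in Hx2. lra.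
    + rewrite length_app, E1, E2. rewrite Hr. simpl. lia.
    + intros t. rewrite in_app_iff, M1, M2. assert (b < c) by (apply (PM_lt f b c l); auto).
      split.
      * intros [[? ?]|[? ?]]; split; auto; lra.
      * intros [Ht Hft]. destruct (Rlt_dec t b); [left|right]; split; auto; lra.
Qed.

Definition lei (w y : R) : nat := if Rle_dec w y then 1%nat else 0%nat.
Fixpoint desc (l : list R) : list R :=
  match l with
  | w :: ((w' :: _) as r) => (if Rlt_dec w' w then w :: w' :: nil else nil) ++ desc r
  | _ => nil
  end.
Fixpoint cd (l : list R) : Prop :=
  match l with
  | w :: ((w' :: _) as r) => w <> w' /\ cd r
  | _ => True
  end.

Ltac evtac := match goal with |- Nat.Even ?n => exists (Nat.div2 n); reflexivity end.

Lemma local_par : forall w w' y, w <> w' ->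
  Nat.Even (eqi w y + bt w w' y + lei w y + lei w' y +
    count_occ Req_EM_T (if Rlt_dec w' w then w :: w' :: nil else nil) y).
Proof.
  intros w w' y H. unfold eqi, bt, lei.
  repeat (destruct Rlt_dec || destruct Req_EM_T || destruct Rle_dec); simpl;
  repeat (destruct Req_EM_T); simpl;
  first [evtac | exfalso; unfold Rmin, Rmax in *; repeat destruct Rle_dec; lra].
Qed.

Lemma parity : forall l w y, cd (w :: l) ->
  Nat.Even (cnt (w :: l) y + lei w y + lei (last (w :: l) 0) y + eqi (last (w :: l) 0) y
            + count_occ Req_EM_T (desc (w :: l)) y).
Proof.
  induction l as [|w' r IH]; intros w y Hcd.
  - simpl. exists (eqi w y + lei w y)%nat. lia.
  - simpl in Hcd. destruct Hcd as [Hne Hcd].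
    specialize (IH w' y Hcd). assert (Hl := local_par w w' y Hne).
    change (cnt (w :: w' :: r) y) with (eqi w y + bt w w' y + cnt (w' :: r) y)%nat.
    change (last (w :: w' :: r) 0) with (last (w' :: r) 0).
    change (desc (w :: w' :: r)) with ((if Rlt_dec w' w then w :: w' :: nil else nil) ++ desc (w' :: r)).
    rewrite count_occ_app.
    destruct IH as [k1 H1]. destruct Hl as [k2 H2].
    exists (k1 + k2 - lei w' y)%nat.
    assert (lei w' y <= 1)%nat by (unfold lei; destruct Rle_dec; lia).
    assert (lei w' y <= k1 + k2)%nat by lia.
    lia.
Qed.

Lemma remove_len : forall (D : list R) x,
  length D = (count_occ Req_EM_T D x + length (remove Req_EM_T x D))%nat.
Proof.
  induction D as [|a D IH]; intros x; simpl; auto.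
  destruct (Req_EM_T a x); destruct (Req_EM_T x a); subst; simpl; try congruence;
  rewrite (IH x); lia.
Qed.

Lemma remove_cnt : forall (D : list R) x y, x <> y ->
  count_occ Req_EM_T (remove Req_EM_T x D) y = count_occ Req_EM_T D y.
Proof.
  induction D as [|a D IH]; intros x y H; simpl; auto.
  destruct (Req_EM_T x a); destruct (Req_EM_T a y); subst; simpl; try congruence;
  try (destruct Req_EM_T; try congruence); rewrite IH; auto.
Qed.

Lemma even_len : forall n (D : list R), (length D <= n)%nat ->
  (forall y, Nat.Even (count_occ Req_EM_T D y)) -> Nat.Even (length D).
Proof.
  induction n; intros D Hn H.
  - destruct D; simpl in *; [exists 0%nat; auto| lia].
  - destruct D as [|x D'].
    + exists 0%nat; auto.
    + rewrite (remove_len (x :: D') x).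
      assert (Nat.Even (length (remove Req_EM_T x (x :: D')))).
      { apply IHn.
        - rewrite (remove_len (x :: D') x) in Hn. simpl count_occ in Hn.
          destruct (Req_EM_T x x); [lia|congruence].
        - intros y. destruct (Req_EM_T x y).
          + subst. rewrite (proj1 (count_occ_not_In Req_EM_T _ y)). exists 0%nat; auto.
            apply remove_In.
          + rewrite remove_cnt; auto. }
      destruct (H x) as [k1 H1]. destruct H0 as [k2 H2]. exists (k1 + k2)%nat. lia.
Qed.

Lemma avoid : forall (l : list R) a b, a < b -> exists y, a < y < b /\ ~ In y l.
Proof.
  induction l as [|x l IH]; intros a b H.
  - exists ((a+b)/2). split; [lra|auto].
  - destruct (Rle_dec x ((a+b)/2)).
    + destruct (IH ((a+b)/2) b) as [y [Hy Hn]]; try lra.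
      exists y; split; [lra|]. intros [E|E]; [lra|auto].
    + destruct (IH a ((a+b)/2)) as [y [Hy Hn]]; try lra.
      exists y; split; [lra|]. intros [E|E]; [lra|auto].
Qed.

Lemma desc_in : forall l y, In y (desc l) -> In y l.
Proof.
  induction l as [|w r IH]; intros y H; simpl in H; auto.
  destruct r as [|w' r']; [destruct H|].
  apply in_app_iff in H. destruct H as [H|H].
  - destruct Rlt_dec; simpl in H; [destruct H as [<-|[<-|[]]]; simpl; auto|destruct H].
  - right. apply IH; auto.
Qed.

Lemma desc_even : forall l, Nat.Even (length (desc l)).
Proof.
  induction l as [|w r IH]; simpl. exists 0%nat; auto.
  destruct r as [|w' r']. exists 0%nat; auto.
  change (desc (w :: w' :: r')) with ((if Rlt_dec w' w then w :: w' :: nil else nil) ++ desc (w' :: r')).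
  rewrite length_app. destruct IH as [k Hk]. rewrite Hk. destruct Rlt_dec.
  exists (S k); simpl; lia. exists k; simpl; lia.
Qed.

Lemma PM_cd : forall f a b l, PM f a b l -> cd l.
Proof.
  intros f a b l H; induction H; simpl.
  - split; auto. apply smono_ne; auto.
  - destruct (PM_head f b c l H1) as [r Hr]. rewrite Hr in *. split; auto. apply smono_ne; auto.
Qed.

Lemma PM_last : forall f a b l, PM f a b l -> last l 0 = f b.
Proof.
  intros f a b l H; induction H; simpl; auto.
  destruct (PM_head f b c l H1) as [r Hr]. rewrite Hr in *. auto.
Qed.

Lemma PM_odd : forall f a b l, PM f a b l -> exists y, ~ Nat.Even (cnt l y).
Proof.
  intros f a b l H. assert (Hcd := PM_cd f a b l H). assert (Hla := PM_last f a b l H).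
  destruct (PM_head f a b l H) as [r Hr]. subst l.
  destruct (Req_EM_T (f a) (f b)) as [E|E].
  - apply NNPP. intros Hn.
    assert (Hall : forall y, Nat.Even (cnt (f a :: r) y)).
    { intros y. apply NNPP. intros Hy. apply Hn. exists y; auto. }
    assert (He : Nat.Even (length (f a :: desc (f a :: r)))).
    { apply (even_len (length (f a :: desc (f a :: r)))); auto.
      intros y. destruct (Hall y) as [k1 H1].
      destruct (parity r (f a) y Hcd) as [k2 H2]. rewrite Hla, <- E in H2.
      destruct (Req_EM_T (f a) y).
      + rewrite count_occ_cons_eq; auto. unfold eqi in H2. destruct (Req_EM_T (f a) y); [|congruence].
        exists (k2 - k1 - lei (f a) y)%nat. unfold lei in *. destruct Rle_dec; lia.
      + rewrite count_occ_cons_neq; auto. unfold eqi in H2. destruct (Req_EM_T (f a) y); [congruence|].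
        exists (k2 - k1 - lei (f a) y)%nat. unfold lei in *. destruct Rle_dec; lia. }
    destruct (desc_even (f a :: r)) as [k Hk]. destruct He as [k' Hk']. change (length (f a :: ?L)) with (S (length L)) in Hk'. lia.
  - destruct (avoid (f a :: r) (Rmin (f a) (f b)) (Rmax (f a) (f b))) as [y [Hy Hn]].
    { unfold Rmin, Rmax; destruct Rle_dec; lra. }
    exists y. intros [k Hk].
    destruct (parity r (f a) y Hcd) as [k2 H2]. rewrite Hla in H2.
    rewrite (proj1 (count_occ_not_In Req_EM_T _ y)) in H2.
    2: { intros Hi. apply Hn. apply desc_in; auto. }
    unfold eqi, lei in H2. destruct (Req_EM_T (f b) y). subst. unfold Rmin, Rmax in Hy; destruct Rle_dec; lra.
    destruct (Rle_dec (f a) y); destruct (Rle_dec (f b) y); try (unfold Rmin, Rmax in Hy; destruct Rle_dec; lra); lia.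
Qed.

Lemma NoDup_map_inj : forall (g : nat -> R), (forall i j, g i = g j -> i = j) ->
  forall l, NoDup l -> NoDup (map g l).
Proof.
  intros g Hg l Hl; induction Hl; simpl; constructor; auto.
  intros Hi. apply in_map_iff in Hi. destruct Hi as [z [E Hz]]. apply Hg in E. subst; auto.
Qed.

Lemma const_inf : forall f, (forall x, 0 <= x <= 1 -> f x = f 0) -> level_card_inf f (f 0).
Proof.
  intros f Hc n. exists (map (fun k => / INR (S k)) (seq 0 n)). split; [|split].
  - apply NoDup_map_inj. intros i j E. apply Nat.succ_inj. apply INR_eq.
    rewrite <- (Rinv_inv (INR (S i))), <- (Rinv_inv (INR (S j))), E; auto.
    apply seq_NoDup.
  - rewrite length_map, length_seq; auto.
  - intros t Ht. apply in_map_iff in Ht. destruct Ht as [k [<- _]].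
    assert (1 <= INR (S k)) by (rewrite S_INR; assert (0 <= INR k) by apply pos_INR; lra).
    assert (0 < / INR (S k)) by (apply Rinv_0_lt_compat; lra).
    assert (/ INR (S k) <= 1) by (rewrite <- Rinv_1; apply Rinv_le_contravar; lra).
    split. lra. apply Hc; lra.
Qed.

Lemma part1 : ~ exists p : list R, Omega_is_024 (poly_eval p).
Proof.
  intros [p H]. set (f := poly_eval p) in *.
  assert (Cf : continuity f) by (apply (Pn_cont (length p)); apply poly_Pn).
  destruct (pm_main (length p) f (poly_Pn p) 0 1 ltac:(lra)) as [Hc|[l Hl]].
  - assert (Omega f None) by (exists (f 0); apply const_inf; auto).
    apply H in H0. destruct H0 as [E|[E|E]]; discriminate.
  - destruct (PM_odd f 0 1 l Hl) as [y Hy].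
    destruct (PM_level f 0 1 l Hl Cf y) as [L [N [E M]]].
    assert (Omega f (Some (cnt l y))) by (exists y; exists L; auto).
    apply H in H0. apply Hy. destruct H0 as [E'|[E'|E']]; injection E' as E'; rewrite E'.
    exists 0%nat; auto. exists 1%nat; auto. exists 2%nat; auto.
Qed.

Definition Gb (u : R) : R := if Rle_dec (3/8) u then 3*u - 1 else 1/2 - u.
Fixpoint Ff (n : nat) (u : R) : R :=
  match n with
  | O => 0
  | S n' => if Rlt_dec (1/4) u then Gb u else Ff n' (2*u) / 2
  end.
Definition NN (u : R) : nat := Z.to_nat (up (/ u)).
Definition F (u : R) : R := Ff (S (NN u)) u.

Lemma pow2_gt : forall n, INR n < 2 ^ n.
Proof.
  induction n. simpl; lra.
  rewrite S_INR. simpl. assert (1 <= 2 ^ n) by (apply pow_R1_Rle; lra). lra.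
Qed.

Lemma NN_spec : forall u, 0 < u -> 1/4 < 2 ^ (NN u) * u.
Proof.
  intros u Hu. unfold NN. destruct (archimed (/ u)) as [H1 H2].
  assert (0 < / u) by (apply Rinv_0_lt_compat; auto).
  assert (Hz : (0 <= up (/u))%Z). { apply le_IZR. lra. }
  assert (INR (Z.to_nat (up (/u))) = IZR (up (/u))).
  { rewrite INR_IZR_INZ. rewrite Z2Nat.id; auto. }
  assert (H3 := pow2_gt (Z.to_nat (up (/u)))).
  assert (/ u < 2 ^ Z.to_nat (up (/ u))) by lra.
  assert (/u * u = 1) by (field; lra).
  assert (/u * u < 2 ^ Z.to_nat (up (/ u)) * u) by (apply Rmult_lt_compat_r; auto).
  lra.
Qed.

Lemma Ff_stab : forall n u, 1/4 < 2^n * u -> forall m, (n < m)%nat -> Ff m u = Ff (S n) u.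
Proof.
  induction n; intros u Hu m Hm.
  - destruct m as [|m]; [lia|]. simpl in Hu. simpl. destruct Rlt_dec; [auto|lra].
  - destruct m as [|m]; [lia|].
    change (Ff (S m) u) with (if Rlt_dec (1/4) u then Gb u else Ff m (2*u) / 2).
    change (Ff (S (S n)) u) with (if Rlt_dec (1/4) u then Gb u else Ff (S n) (2*u) / 2).
    destruct Rlt_dec; auto. rewrite (IHn (2*u)); auto. simpl in Hu. lra. lia.
Qed.

Lemma F_eq : forall n u, 0 < u -> 1/4 < 2^n * u -> F u = Ff (S n) u.
Proof.
  intros n u Hu H. unfold F. assert (H2 := NN_spec u Hu).
  rewrite <- (Ff_stab (NN u) u H2 (S (max n (NN u)))) by lia.
  rewrite <- (Ff_stab n u H (S (max n (NN u)))) by lia. auto.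
Qed.

Lemma F_block : forall u, 1/4 < u -> F u = Gb u.
Proof.
  intros u H. rewrite (F_eq 0 u); try (simpl; lra). simpl. destruct Rlt_dec; auto; lra.
Qed.

Lemma F_scale : forall u, 0 < u -> u <= 1/4 -> F u = F (2*u) / 2.
Proof.
  intros u Hu H. assert (H1 := NN_spec u Hu). unfold F at 1.
  destruct (NN u) as [|n] eqn:En. simpl in H1; lra.
  change (Ff (S (S n)) u) with (if Rlt_dec (1/4) u then Gb u else Ff (S n) (2*u) / 2).
  destruct Rlt_dec; [lra|]. rewrite (F_eq n (2*u)); auto. lra.
  simpl in H1. lra.
Qed.

Lemma dbl_ind : forall P : R -> Prop,
  (forall y, 1/4 < y -> P y) -> (forall y, 0 < y -> y <= 1/4 -> P (2*y) -> P y) ->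
  forall y, 0 < y -> P y.
Proof.
  intros P Hb Hs y Hy. assert (H := NN_spec y Hy). set (k := NN y) in H. clearbody k.
  revert y Hy H. induction k as [|n IH]; intros y Hy H.
  - apply Hb. simpl in H; lra.
  - destruct (Rlt_dec (1/4) y). apply Hb; auto.
    apply Hs; auto. lra. apply IH. lra. simpl in H. lra.
Qed.

Ltac absr := unfold Rabs in *; repeat destruct Rcase_abs; lra.

Lemma F_bounds : forall u, 0 < u -> u <= 1/2 -> 0 < F u <= u.
Proof.
  apply (dbl_ind (fun u => u <= 1/2 -> 0 < F u <= u)).
  - intros u Hu H. rewrite F_block; auto. unfold Gb; destruct Rle_dec; lra.
  - intros u Hu H IH _. rewrite F_scale; auto. specialize (IH ltac:(lra)). lra.
Qed.

Lemma Gb_lip : forall u v, 1/4 <= u -> u <= v -> v <= 1/2 -> Rabs (Gb v - Gb u) <= 3 * (v - u).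
Proof. intros u v H1 H2 H3. unfold Gb; repeat destruct Rle_dec; absr. Qed.

Lemma F_half : F (1/2) = 1/2.
Proof. rewrite F_block by lra. unfold Gb; destruct Rle_dec; lra. Qed.

Lemma F_quarter : F (1/4) = 1/4.
Proof. rewrite F_scale by lra. replace (2 * (1/4)) with (1/2) by lra. rewrite F_half; lra. Qed.

Lemma F_lip : forall u v, 0 < u -> u <= v -> v <= 1/2 -> Rabs (F v - F u) <= 3 * (v - u).
Proof.
  intros u v Hu. revert v. revert u Hu.
  apply (dbl_ind (fun u => forall v, u <= v -> v <= 1/2 -> Rabs (F v - F u) <= 3 * (v - u))).
  - intros u Hu v H1 H2. rewrite !F_block by lra. apply Gb_lip; lra.
  - intros u Hu H IH v H1 H2. destruct (Rle_dec v (1/4)).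
    + rewrite (F_scale v), (F_scale u) by lra. specialize (IH (2*v) ltac:(lra) ltac:(lra)). absr.
    + rewrite (F_block v) by lra. rewrite (F_scale u) by lra.
      specialize (IH (1/2) ltac:(lra) ltac:(lra)). rewrite F_half in IH.
      assert (Hg := Gb_lip (1/4) v ltac:(lra) ltac:(lra) ltac:(lra)).
      replace (Gb (1/4)) with (1/4) in Hg by (unfold Gb; destruct Rle_dec; lra).
      absr.
Qed.

Lemma NoDup_map_injR : forall (g : R -> R), (forall i j, g i = g j -> i = j) ->
  forall l, NoDup l -> NoDup (map g l).
Proof.
  intros g Hg l Hl; induction Hl; simpl; constructor; auto.
  intros Hi. apply in_map_iff in Hi. destruct Hi as [z [E Hz]]. apply Hg in E. subst; auto.
Qed.

Definition T (y : R) : nat :=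
  if Rlt_dec (1/2) y then 0%nat else if Rlt_dec (1/4) y then 1%nat
  else if Req_EM_T y (1/4) then 2%nat else 3%nat.

Lemma Gb_solve : forall u y, 1/4 < u -> u <= 1/2 ->
  (Gb u = y <-> ((u = (1+y)/3 /\ 1/8 <= y <= 1/2) \/ (u = 1/2 - y /\ 1/8 < y < 1/4))).
Proof. intros u y H1 H2. unfold Gb; destruct Rle_dec; split; intros; lra. Qed.

Lemma TL : forall y, 0 < y -> exists l, NoDup l /\ length l = T y /\
  forall u, In u l <-> (0 < u /\ u <= 1/2 /\ F u = y).
Proof.
  apply dbl_ind.
  - intros y Hy. exists (if Rle_dec y (1/2) then (1+y)/3 :: nil else nil).
    split; [|split].
    + destruct Rle_dec; repeat constructor; auto.
    + unfold T. repeat destruct Rle_dec; repeat destruct Rlt_dec; simpl; try lra; auto.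
    + intros u. split.
      * intros Hu. destruct Rle_dec; simpl in Hu; [|destruct Hu]. destruct Hu as [<-|[]].
        split; [lra|split;[lra|]]. rewrite F_block by lra. apply Gb_solve; lra.
      * intros [H1 [H2 H3]]. destruct (Rlt_dec (1/4) u).
        -- rewrite F_block in H3 by lra. apply Gb_solve in H3; try lra.
           destruct Rle_dec; [left|]; lra.
        -- assert (Hb := F_bounds u H1 H2). lra.
  - intros y Hy Hy4 [l' [N' [E' M']]].
    set (lB := (if Rle_dec (1/8) y then (1+y)/3 :: nil else nil) ++
               (if Rlt_dec (1/8) y then if Rlt_dec y (1/4) then (1/2 - y) :: nil else nil else nil)).
    assert (MB : forall u, In u lB <-> (1/4 < u /\ u <= 1/2 /\ Gb u = y)).
    { intros u. unfold lB. rewrite in_app_iff. split.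
      - intros [Hu|Hu]; repeat destruct Rle_dec; repeat destruct Rlt_dec; simpl in Hu;
        try destruct Hu as [<-|[]]; try destruct Hu;
        (split; [lra|split;[lra|]]; apply Gb_solve; lra).
      - intros [H1 [H2 H3]]. apply Gb_solve in H3; auto.
        destruct H3 as [[-> H3]|[-> H3]]; [left|right];
        repeat destruct Rle_dec; repeat destruct Rlt_dec; simpl; try lra; auto. }
    exists (lB ++ map (fun w => w / 2) l'). split; [|split].
    + apply NoDup_app.
      * unfold lB. apply NoDup_app; repeat destruct Rle_dec; repeat destruct Rlt_dec;
        repeat constructor; auto; simpl; intros a Ha; try destruct Ha as [<-|[]]; try destruct Ha;
        intros [E|[]]; lra.
      * apply NoDup_map_injR; auto. intros i j E; lra.
      * intros a Ha Hb. apply MB in Ha. apply in_map_iff in Hb. destruct Hb as [w [<- Hw]].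
        apply M' in Hw. lra.
    + rewrite length_app, length_map, E'. unfold lB, T.
      rewrite length_app.
      repeat destruct Rle_dec; repeat destruct Rlt_dec; repeat destruct Req_EM_T; simpl; try lra; auto.
    + intros u. rewrite in_app_iff, MB, in_map_iff. split.
      * intros [[H1 [H2 H3]]|[w [<- Hw]]].
        -- split; [lra|split;[lra|]]. rewrite F_block; auto.
        -- apply M' in Hw. destruct Hw as [H1 [H2 H3]]. split; [lra|split;[lra|]].
           rewrite F_scale by lra. replace (2 * (w/2)) with w by lra. lra.
      * intros [H1 [H2 H3]]. destruct (Rlt_dec (1/4) u).
        -- left. rewrite F_block in H3; auto.
        -- right. exists (2*u). split; [lra|]. apply M'. rewrite F_scale in H3 by lra.
           split; [lra|split;[lra|lra]].
Qed.

Definition Pp (x : R) : R :=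
  if Rlt_dec x (1/6) then 3*x else if Rlt_dec x (1/3) then 3/4 - 3*x/2 else 3*x/2 - 1/4.
Definition fE (x : R) : R :=
  if Rlt_dec x (1/2) then Pp x else if Rlt_dec x 1 then F (1 - x) else 0.

Lemma P_solve : forall t y, 0 <= t < 1/2 ->
  (Pp t = y <-> ((t = y/3 /\ 0 <= y < 1/2) \/ (t = 1/2 - 2*y/3 /\ 1/4 < y <= 1/2)
                 \/ (t = 2*y/3 + 1/6 /\ 1/4 <= y < 1/2))).
Proof. intros t y Ht. unfold Pp; repeat destruct Rlt_dec; split; intros; lra. Qed.

Definition C (y : R) : nat :=
  if Rlt_dec y 0 then 0%nat else if Req_EM_T y 0 then 2%nat else
  if Rlt_dec (1/2) y then 0%nat else if Req_EM_T y (1/2) then 2%nat else 4%nat.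

Lemma fE_nonneg : forall t, 0 <= t <= 1 -> 0 <= fE t.
Proof.
  intros t Ht. unfold fE. destruct Rlt_dec. unfold Pp; repeat destruct Rlt_dec; lra.
  destruct Rlt_dec; [|lra]. assert (H := F_bounds (1 - t) ltac:(lra) ltac:(lra)). lra.
Qed.

Lemma level_fE : forall y, exists L, NoDup L /\ length L = C y /\
  forall t, In t L <-> (0 <= t <= 1 /\ fE t = y).
Proof.
  intros y. destruct (Rlt_dec y 0) as [Hy|Hy].
  - exists nil. split; [constructor|split]. unfold C; destruct Rlt_dec; auto; lra.
    intros t; simpl; split; [intros []|]. intros [Ht E]. assert (H := fE_nonneg t Ht). lra.
  - destruct (Req_EM_T y 0) as [Hy0|Hy0].
    + subst y. exists (0 :: 1 :: nil). split; [|split].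
      * constructor. intros [E|[]]; lra. constructor; auto; constructor.
      * unfold C; destruct Rlt_dec; try lra; destruct Req_EM_T; auto; lra.
      * intros t; simpl; split.
        -- intros [<-|[<-|[]]]; split; try lra; unfold fE, Pp; repeat destruct Rlt_dec; lra.
        -- intros [Ht E]. unfold fE in E. destruct (Rlt_dec t (1/2)).
           ++ apply P_solve in E; [left; lra|lra].
           ++ destruct (Rlt_dec t 1). assert (H := F_bounds (1 - t) ltac:(lra) ltac:(lra)). lra.
              right; left; lra.
    + assert (Hp : 0 < y) by lra.
      destruct (TL y Hp) as [l [N [E M]]].
      set (pl := (if Rlt_dec y (1/2) then y/3 :: nil else nil) ++
                 (if Rlt_dec (1/4) y then if Rle_dec y (1/2) then (1/2 - 2*y/3) :: nil else nil else nil) ++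
                 (if Rle_dec (1/4) y then if Rlt_dec y (1/2) then (2*y/3 + 1/6) :: nil else nil else nil)).
      assert (MP : forall t, In t pl <-> (0 <= t < 1/2 /\ Pp t = y)).
      { intros t. unfold pl. rewrite !in_app_iff. split.
        - intros Hi; repeat destruct Rle_dec; repeat destruct Rlt_dec; simpl in Hi;
          repeat (destruct Hi as [Hi|Hi]); try (destruct Hi as [<-|[]]); try destruct Hi;
          try subst t; (split; [lra|apply P_solve; lra]).
        - intros [Ht Hf]. apply P_solve in Hf; auto.
          destruct Hf as [[-> Hf]|[[-> Hf]|[-> Hf]]];
          repeat destruct Rle_dec; repeat destruct Rlt_dec; simpl; try lra; auto. }
      exists (pl ++ map (fun u => 1 - u) l). split; [|split].
      * apply NoDup_app.
        -- unfold pl. repeat apply NoDup_app; repeat destruct Rle_dec; repeat destruct Rlt_dec;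
           repeat constructor; auto; simpl; intros a Ha; try destruct Ha as [<-|[]]; try destruct Ha;
           try (rewrite in_app_iff; simpl); intuition lra.
        -- apply NoDup_map_injR; auto. intros i j Eq; lra.
        -- intros a Ha Hb. apply MP in Ha. apply in_map_iff in Hb. destruct Hb as [w [<- Hw]].
           apply M in Hw. lra.
      * rewrite length_app, length_map, E. unfold pl, T, C. rewrite !length_app.
        repeat destruct Rle_dec; repeat destruct Rlt_dec; repeat destruct Req_EM_T; simpl; try lra; auto.
      * intros t. rewrite in_app_iff, MP, in_map_iff. split.
        -- intros [[H1 H2]|[w [<- Hw]]].
           ++ split; [lra|]. unfold fE. destruct (Rlt_dec t (1/2)); [auto|lra].
           ++ apply M in Hw. destruct Hw as [H1 [H2 H3]]. split; [lra|]. unfold fE.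
              destruct (Rlt_dec (1 - w) (1/2)); [lra|]. destruct (Rlt_dec (1 - w) 1); [|lra].
              replace (1 - (1 - w)) with w by lra. auto.
        -- intros [Ht Hf]. unfold fE in Hf. destruct (Rlt_dec t (1/2)).
           ++ left; split; auto; lra.
           ++ destruct (Rlt_dec t 1); [|lra]. right. exists (1 - t). split; [lra|].
              apply M. split; [lra|split; [lra|auto]].
Qed.

Lemma P_lip : forall a b, 0 <= a -> a <= b -> b <= 1/2 -> Rabs (Pp b - Pp a) <= 3 * (b - a).
Proof. intros a b H1 H2 H3. unfold Pp; repeat destruct Rlt_dec; absr. Qed.

Definition Hh (t : R) : R := if Rlt_dec t 1 then F (1 - t) else 0.

Lemma H_lip : forall a b, 1/2 <= a -> a <= b -> b <= 1 -> Rabs (Hh b - Hh a) <= 3 * (b - a).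
Proof.
  intros a b H1 H2 H3. unfold Hh. destruct (Rlt_dec b 1); destruct (Rlt_dec a 1); try lra.
  - rewrite Rabs_minus_sym. replace (3 * (b - a)) with (3 * ((1 - a) - (1 - b))) by ring.
    apply F_lip; lra.
  - assert (H := F_bounds (1 - a) ltac:(lra) ltac:(lra)). absr.
  - absr.
Qed.

Lemma fE_lip : forall a b, 0 <= a -> a <= b -> b <= 1 -> Rabs (fE b - fE a) <= 3 * (b - a).
Proof.
  intros a b H1 H2 H3.
  assert (EP : forall t, t < 1/2 -> fE t = Pp t) by (intros t Ht; unfold fE; destruct Rlt_dec; auto; lra).
  assert (EH : forall t, 1/2 <= t -> fE t = Hh t) by (intros t Ht; unfold fE, Hh; destruct Rlt_dec; auto; lra).
  destruct (Rlt_dec b (1/2)).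
  - rewrite !EP by lra. apply P_lip; lra.
  - destruct (Rlt_dec a (1/2)).
    + rewrite (EP a) by lra. rewrite (EH b) by lra.
      assert (A1 := P_lip a (1/2) ltac:(lra) ltac:(lra) ltac:(lra)).
      assert (A2 := H_lip (1/2) b ltac:(lra) ltac:(lra) ltac:(lra)).
      assert (Hh (1/2) = 1/2) by (unfold Hh; destruct Rlt_dec; [|lra]; replace (1 - 1/2) with (1/2) by lra; apply F_half).
      assert (Pp (1/2) = 1/2) by (unfold Pp; repeat destruct Rlt_dec; lra).
      absr.
    + rewrite !EH by lra. apply H_lip; lra.
Qed.

Lemma fE_cont : continuous_on_01 fE.
Proof.
  intros x Hx eps He. exists (eps / 3). split; [lra|]. intros y Hy Hd.
  destruct (Rle_dec x y).
  - assert (H := fE_lip x y ltac:(lra) r ltac:(lra)). absr.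
  - assert (H := fE_lip y x ltac:(lra) ltac:(lra) ltac:(lra)). absr.
Qed.

Lemma fE_024 : Omega_is_024 fE.
Proof.
  intros k. destruct k as [n|]; simpl; split.
  - intros [x [L' [N' [E' M']]]]. destruct (level_fE x) as [L [N [E M]]].
    assert (length L' <= length L)%nat by (apply NoDup_incl_length; auto; intros t Ht; apply M, M', Ht).
    assert (length L <= length L')%nat by (apply NoDup_incl_length; auto; intros t Ht; apply M', M, Ht).
    assert (n = C x) by lia. subst n. unfold C.
    idtac.
    all: rewrite H1; unfold C; repeat destruct Rlt_dec; repeat destruct Req_EM_T; first [left; reflexivity | right; left; reflexivity | right; right; reflexivity].
  - intros [E|[E|E]]; injection E as E; subst n.
    + exists 1. destruct (level_fE 1) as [L [N [E M]]]. exists L. split; auto. split; auto.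
      rewrite E. unfold C. repeat destruct Rlt_dec; repeat destruct Req_EM_T; auto; lra.
    + exists 0. destruct (level_fE 0) as [L [N [E M]]]. exists L. split; auto. split; auto.
      rewrite E. unfold C. repeat destruct Rlt_dec; repeat destruct Req_EM_T; auto; lra.
    + exists (1/3). destruct (level_fE (1/3)) as [L [N [E M]]]. exists L. split; auto. split; auto.
      rewrite E. unfold C. repeat destruct Rlt_dec; repeat destruct Req_EM_T; auto; lra.
  - intros [x Hx]. destruct (Hx 5%nat) as [L5 [N5 [E5 M5]]].
    destruct (level_fE x) as [L [N [E M]]].
    assert (length L5 <= length L)%nat by (apply NoDup_incl_length; auto; intros t Ht; apply M, M5, Ht).
    exfalso. rewrite E5, E in H. unfold C in H.
    repeat destruct Rlt_dec; repeat destruct Req_EM_T; lia.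
  - intros [E|[E|E]]; discriminate.
Qed.

Theorem mainTheorem7 :
  (~ exists p : list R, Omega_is_024 (poly_eval p)) /\
  (exists f : R -> R, continuous_on_01 f /\ Omega_is_024 f).
Proof.
  split.
  - exact part1.
  - exists fE. split. exact fE_cont. exact fE_024.
Qed.
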